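(* Let $\mathcal{D}$ be an $S(2,k,v)$ and $G_1=1$-$\mathrm{BIG}(\mathcal{D})$. If $$\alpha(G_1) > k\left\lfloor \frac{v(v-1)}{k^2v-k^3+k^2-k}\right\rfloor,$$ then $G_1$ is not silver.
   Context: A Steiner $2$-design $S(2,k,v)$ ($2<k<v$) is a pair $(V,\mathcal{B})$ with $|V|=v$ and $\mathcal{B}$ a collection of $k$-subsets of $V$ (blocks) such that every $2$-subset of $V$ lies in exactly one block. The $1$-block intersection graph $1$-$\mathrm{BIG}(\mathcal{D})$ has the blocks as vertices, two blocks adjacent iff they intersect in exactly one element; it is $k(v-k)/(k-1)$-regular with $v(v-1)/(k(k-1))$ vertices. $\alpha(G)$ denotes the independence number; an $\alpha$-set is a maximum independent set. Let $G$ be an $r$-regular graph and $c$ a proper $(r+1)$-coloring of $G$. A vertex $x$ is rainbow with respect to $c$ if every one of the $r+1$ colors appears on $N[x]=N(x)\cup\{x\}$. Given an $\alpha$-set $I$, $c$ is silver with respect to $I$ if every $x\in I$ is rainbow; $G$ is silver if it admits a silver coloring with respect to some $\alpha$-set. *)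

(* Defs.v *)
From mathcomp Require Import all_boot.
Set Implicit Arguments. Unset Strict Implicit. Unset Printing Implicit Defensive.

(* A simple graph is given by a vertex set [Vs : {set T}] and a symmetric
   irreflexive adjacency relation [adj : rel T] (only its restriction to Vs
   matters). *)

(* Steiner 2-design S(2,k,v) on the point set V (v = #|V|) with block set B. *)
Definition steiner_2design (V : finType) (k : nat) (B : {set {set V}}) : Prop :=
  [/\ 2 < k, k < #|V|,
      (forall b, b \in B -> #|b| = k) &
      (forall x y : V, x != y ->
         #|[set b in B | (x \in b) && (y \in b)]| = 1)].

Definition big1_adj (V : finType) : rel {set V} :=
  fun b1 b2 => (b1 != b2) && (#|b1 :&: b2| == 1).

Definition independent (T : finType) (Vs : {set T}) (adj : rel T) (I : {set T}) : bool :=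
  (I \subset Vs) && [forall x in I, forall y in I, ~~ adj x y].

Definition alpha (T : finType) (Vs : {set T}) (adj : rel T) : nat :=
  \max_(I in powerset Vs | independent Vs adj I) #|I|.

Definition alpha_set (T : finType) (Vs : {set T}) (adj : rel T) (I : {set T}) : Prop :=
  independent Vs adj I /\ #|I| = alpha Vs adj.

Definition proper_coloring (T : finType) (Vs : {set T}) (adj : rel T) (m : nat)
  (c : T -> nat) : Prop :=
  (forall x, x \in Vs -> c x < m) /\
  (forall x y, x \in Vs -> y \in Vs -> adj x y -> c x <> c y).

Definition closed_nbhd (T : finType) (Vs : {set T}) (adj : rel T) (x : T) : {set T} :=
  [set y in Vs | (y == x) || adj x y].

Definition rainbow (T : finType) (Vs : {set T}) (adj : rel T) (m : nat)
  (c : T -> nat) (x : T) : Prop :=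
  forall i, i < m -> exists2 y, y \in closed_nbhd Vs adj x & c y = i.

(* For an r-regular graph: c is a silver (r+1)-coloring w.r.t. the alpha-set I *)
Definition silver_wrt (T : finType) (Vs : {set T}) (adj : rel T) (r : nat)
  (c : T -> nat) (I : {set T}) : Prop :=
  alpha_set Vs adj I /\ proper_coloring Vs adj r.+1 c /\
  (forall x, x \in I -> rainbow Vs adj r.+1 c x).

Definition silver (T : finType) (Vs : {set T}) (adj : rel T) (r : nat) : Prop :=
  exists (I : {set T}) (c : T -> nat), silver_wrt Vs adj r c I.

(* Main.v *)
Require Import Defs.
From mathcomp Require Import all_boot.

Lemma sum_card (T:finType) (A : {set T}) (p : pred T) :
  \sum_(y in A) (p y : nat) = #|[set y in A | p y]|.
Proof.
rewrite -[RHS]sum1_card (eq_bigl (fun y => (y \in A) && p y) _ (fun y => in_set _ _)).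
rewrite big_mkcondr /=; apply: eq_bigr => y _; by case: (p y).
Qed.

Section S.
Variables (V : finType) (k : nat) (B : {set {set V}}).
Hypothesis H : steiner_2design k B.

Lemma factA x : #|[set b in B | x \in b]| * (k-1) = #|V| - 1.
Proof.
case: H => k2 kv Bk Bu.
rewrite [RHS]subn1 -(cardsC1 x) -[RHS]sum1_card.
transitivity (\sum_(y in [set~ x]) #|[set b in B | (x \in b) && (y \in b)]|); last first.
  apply: eq_bigr => y; rewrite !inE => hy; by rewrite Bu // eq_sym.
transitivity (\sum_(y in [set~ x]) \sum_(b in [set b in B | x \in b]) (y \in b : nat)); last first.
  apply: eq_bigr => y _; rewrite sum_card; apply: eq_card => b; by rewrite !inE andbA.
rewrite exchange_big /= -sum_nat_const.
apply: eq_bigr => b; rewrite inE => /andP[bB xb].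
rewrite sum_card.
have -> : [set y in [set~ x] | y \in b] = b :\ x by apply/setP => y; rewrite !inE andbC.
by rewrite -(Bk _ bB) (cardsD1 x b) xb add1n subn1.
Qed.

Lemma factB : #|B| * k = \sum_(x in [set: V]) #|[set b in B | x \in b]|.
Proof.
case: H => k2 kv Bk Bu.
rewrite -sum_nat_const.
transitivity (\sum_(b in B) \sum_(x in [set: V]) (x \in b : nat)).
  apply: eq_bigr => b bB; rewrite sum_card -(Bk _ bB); apply: eq_card => x; by rewrite !inE.
rewrite exchange_big /=; apply: eq_bigr => x _; by rewrite sum_card.
Qed.

Lemma factC : #|B| * k * (k-1) = #|V| * (#|V| - 1).
Proof.
rewrite factB big_distrl /=.
under eq_bigr => x _ do rewrite factA.
by rewrite sum_nat_const cardsT.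
Qed.
End S.

Lemma key (V : finType) k (B : {set {set V}}) (I : {set {set V}}) (c : {set V} -> nat) R i :
  steiner_2design k B -> independent B (@big1_adj V) I ->
  (forall x, x \in I -> rainbow B (@big1_adj V) R.+1 c x) -> i < R.+1 ->
  #|I| <= k * #|[set y in B | c y == i]|.
Proof.
move=> [k2 kv Bk Bu] /andP[IB /forall_inP Iind] rain hi.
set C := [set y in B | c y == i].
have k0 : 0 < k by apply: ltn_trans k2.
rewrite -sum1_card.
apply: (@leq_trans (\sum_(x in I) \sum_(y in C) (y \in closed_nbhd B (@big1_adj V) x : nat))).
  apply: leq_sum => x xI; rewrite sum_card card_gt0; apply/set0Pn.
  have [y yN cy] := rain x xI i hi.
  exists y; rewrite inE yN andbT inE cy eqxx andbT.
  by move: yN; rewrite /closed_nbhd inE => /andP[].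
rewrite exchange_big /= mulnC -sum_nat_const.
apply: leq_sum => y; rewrite inE => /andP[yB _].
rewrite sum_card.
set F := [set x in I | _].
have : 0 < #|y| by rewrite Bk.
move=> /card_gt0P[p0 _].
pose g x := odflt p0 [pick p in x :&: y].
have gin : forall x, x \in F -> g x \in x :&: y.
  move=> x; rewrite !inE => /andP[xI] /andP[_ hx].
  have : 0 < #|x :&: y|.
    case/orP: hx => [/eqP -> | /andP[_ /eqP ->]] //.
    by rewrite setIid Bk // (subsetP IB).
  rewrite /g -in_setI; case: pickP => [p hp _ /=| h]; first by [].
  move=> gt; exfalso; move: gt; by rewrite (eq_card0 h).
have inj : {in F &, injective g}.
  move=> x1 x2 h1 h2 eg.
  case: (eqVneq x1 x2) => // ne; exfalso.
  have := gin _ h1; have := gin _ h2; rewrite -eg !inE => /andP[px2 _] /andP[px1 _].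
  have x1I : x1 \in I by move: h1; rewrite inE => /andP[].
  have x2I : x2 \in I by move: h2; rewrite inE => /andP[].
  have := Iind _ x1I; move=> /forall_inP /(_ _ x2I).
  rewrite /big1_adj ne /= => n1.
  have : 0 < #|(x1 :&: x2) :\ g x1|.
    move: n1; rewrite (cardsD1 (g x1)) !inE px1 px2 /= add1n.
    by case: #|_|.
  move=> /card_gt0P[q]; rewrite !inE => /andP[qp /andP[qx1 qx2]].
  have := Bu _ _ qp => /eqP /cards1P[b0 hb0].
  have : x1 \in [set b0] by rewrite -hb0 !inE qx1 px1 (subsetP IB).
  have : x2 \in [set b0] by rewrite -hb0 !inE qx2 px2 (subsetP IB).
  rewrite !inE => /eqP e2 /eqP e1.
  by rewrite e1 e2 eqxx in ne.
rewrite -(Bk y yB) -(card_in_imset inj); apply: subset_leq_card.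
apply/subsetP => _ /imsetP[x xF ->]; have := gin x xF; rewrite inE => /andP[_ ->].
done.
Qed.

From Stdlib Require Import Lia.
Lemma a1 k v r : 2 < k -> (k-1)*r = v-1 -> k < v -> k*(v-k) %/ (k-1) = k*(r-1).
Proof.
move=> k2 hr kv.
have -> : k*(v-k) = (k-1)*(k*(r-1)).
  move: hr; rewrite -!multE -!minusE => hr. move/ltP: kv => kv. move/ltP: k2 => k2. nia.
by rewrite mulKn // subn_gt0 ltnW.
Qed.
Lemma a2 k v r : 2 < k -> (k-1)*r = v-1 -> k < v ->
  k ^ 2 * v + k ^ 2 - (k ^ 3 + k) = k*(k-1)*(k*(r-1)).+1.
Proof.
move=> k2 hr kv.
move: hr; rewrite !expnS !expn0 !muln1 -!multE -!minusE -!plusE => hr. move/ltP: kv => kv. move/ltP: k2 => k2. nia.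
Qed.

Theorem theorem4 (V : finType) (k : nat) (B : {set {set V}}) :
  steiner_2design k B ->
  k * ((#|V| * (#|V| - 1)) %/ ((k ^ 2 * #|V| + k ^ 2) - (k ^ 3 + k)))
    < alpha B (@big1_adj V) ->
  ~ silver B (@big1_adj V) ((k * (#|V| - k)) %/ (k - 1)).
Proof.
move=> H Ha [I [c [[Iind Icard] [[cB _] rain]]]].
have H' := H; case: H' => k2 kv Bk Bu.
have /card_gt0P[x0 _] : 0 < #|V| by apply: leq_ltn_trans kv.
set r := #|[set b in B | x0 \in b]|.
have hr : (k-1)*r = #|V| - 1 by by rewrite mulnC (@factA _ _ _ H x0).
rewrite (@a2 _ _ _ k2 hr kv) in Ha.
rewrite (@a1 _ _ _ k2 hr kv) in rain cB.
set R := (k * (r-1)) in Ha rain cB *.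
set Q := (_ %/ _) in Ha.
have hC : forall j, j < R.+1 -> Q < #|[set y in B | c y == j]|.
  move=> j hj; have := @key _ _ _ _ _ _ _ H Iind rain hj.
  rewrite Icard => h; have := leq_trans Ha h.
  by rewrite ltn_pmul2l // (ltn_trans _ k2).
have sB : \sum_(j < R.+1) #|[set y in B | c y == j]| = #|B|.
  rewrite -[#|B|]sum1_card (partition_big (fun y => inord (c y) : 'I_R.+1) predT) //=.
  apply: eq_bigr => j _; rewrite -sum1_card; apply: eq_bigl => y; rewrite inE.
  case yB: (y \in B) => //=.
  by rewrite -val_eqE /= inordK // cB.
have le1 : R.+1 * Q.+1 <= #|B|.
  rewrite -sB.
  have -> : R.+1 * Q.+1 = \sum_(j < R.+1) Q.+1 by rewrite sum_nat_const card_ord.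
  by apply: leq_sum => j _; apply: hC.
have D0 : 0 < k * (k-1) * R.+1 by rewrite !muln_gt0 subn_gt0 ltnW // (ltn_trans _ k2).
have := ltn_ceil (#|V| * (#|V| - 1)) D0.
have := ltn_ceil (#|V| * (#|V| - 1)) D0; rewrite -/Q => h.
have e : Q.+1 * (k*(k-1)*R.+1) = (R.+1*Q.+1)*(k*(k-1)) by rewrite -!multE; lia.
have : (R.+1*Q.+1)*(k*(k-1)) <= #|B| * (k*(k-1)) by rewrite leq_mul2r le1 orbT.
have fc := @factC _ _ _ H; rewrite -mulnA in fc.
move=> le2; rewrite e in h; rewrite fc in le2.
by have := leq_trans h le2; rewrite ltnn.
Qed.
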